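(* A regular Hausdorff space $X$ has a point-regular base if and only if $\mathcal{F}(X)$ has a point-regular base.
   Context: $\mathcal{F}(X)$ is the set of nonempty finite subsets of $X$ with the Vietoris topology (base: $\langle U_1,\dots,U_k\rangle=\{A: A\subset\bigcup_i U_i,\ A\cap U_j\neq\emptyset\ \forall j\}$, $U_i$ open in $X$). A base $\mathcal{B}$ of a space $Y$ is point-regular if for every $x\in Y$ and every neighborhood $U$ of $x$, only finitely many members of $\mathcal{B}$ contain $x$ and meet $Y\setminus U$. *)

(* Defs.v *)
From HB Require Import structures.
From mathcomp Require Import all_boot all_order all_algebra.
From mathcomp Require Import all_classical all_reals all_analysis.
Set Implicit Arguments. Unset Strict Implicit. Unset Printing Implicit Defensive.
Local Open Scope classical_set_scope.

Definition is_nbhs_of {Y : Type} (opn : set (set Y)) (y : Y) (U : set Y) : Prop :=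
  exists O, opn O /\ O y /\ O `<=` U.

Definition is_base {Y : Type} (opn : set (set Y)) (B : set (set Y)) : Prop :=
  B `<=` opn /\
  (forall (O : set Y) (y : Y), opn O -> O y -> exists b, B b /\ b y /\ b `<=` O).

Definition point_regular_base {Y : Type} (opn : set (set Y)) (B : set (set Y)) : Prop :=
  is_base opn B /\
  (forall (y : Y) (U : set Y), is_nbhs_of opn y U ->
     finite_set [set b | B b /\ b y /\ b `&` ~` U !=set0]).

Definition has_point_regular_base {Y : Type} (opn : set (set Y)) : Prop :=
  exists B, point_regular_base opn B.

Definition finsub (X : Type) := {A : set X | finite_set A /\ A !=set0}.

Definition vietoris_basic {X : Type} (k : nat) (Us : 'I_k -> set X) : set (finsub X) :=
  [set A | (forall x, proj1_sig A x -> exists i, Us i x) /\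
           (forall i, proj1_sig A `&` Us i !=set0)].

Definition vietoris_open (X : topologicalType) : set (set (finsub X)) :=
  [set W | forall A, W A -> exists (k : nat) (Us : 'I_k -> set X),
      (0 < k)%N /\ (forall i, open (Us i)) /\ vietoris_basic Us A /\
      vietoris_basic Us `<=` W].

(* Main.v *)
Require Import Defs.
From HB Require Import structures.
From mathcomp Require Import all_boot all_order all_algebra finmap.
From mathcomp Require Import all_classical all_reals all_analysis.
From Stdlib Require Import Classical.
Set Implicit Arguments. Unset Strict Implicit. Unset Printing Implicit Defensive.
Local Open Scope classical_set_scope.

Section Dev.
Variable X : topologicalType.
Hypothesis T1 : forall x : X, closed [set x].
Variable B : set (set X).
Hypothesis HB : point_regular_base open B.

Definition strict (b c : set X) := b `<=` c /\ ~ (c `<=` b).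
Definition Sup (b : set X) := [set c | B c /\ strict b c].

Lemma B_open b : B b -> open b.
Proof. by move=> Bb; apply: (proj1 (proj1 HB)). Qed.

Lemma nbhs_of_open (b : set X) x : open b -> b x -> is_nbhs_of open x b.
Proof. by move=> ob bx; exists b; split; [|split]. Qed.

Lemma big_fin x (U : set X) : is_nbhs_of open x U ->
  finite_set [set c | B c /\ c x /\ c `&` ~` U !=set0].
Proof. by move=> H; apply: (proj2 HB). Qed.

Lemma strict_ex b c : strict b c -> exists z, c z /\ ~ b z.
Proof.
move=> [_ nc]; apply: NNPP => H; apply: nc => z cz; apply: NNPP => bz.
by apply: H; exists z.
Qed.

Lemma Sup_sub x b : B b -> b x ->
  Sup b `<=` [set c | B c /\ c x /\ c `&` ~` b !=set0].
Proof.
move=> Bb bx c [Bc sbc]; split=> //; split; first by apply: (proj1 sbc).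
by have [z [cz nbz]] := strict_ex sbc; exists z.
Qed.

Lemma Sup_fin x b : B b -> b x -> finite_set (Sup b).
Proof.
move=> Bb bx; apply: sub_finite_set (Sup_sub Bb bx) _.
by apply: big_fin; apply: nbhs_of_open => //; apply: B_open.
Qed.

Lemma Sup_lt x b c : B b -> b x -> B c -> strict b c ->
  (#|` fset_set (Sup c)| < #|` fset_set (Sup b)|)%N.
Proof.
move=> Bb bx Bc sbc.
have cx : c x by apply: (proj1 sbc).
have fb := Sup_fin Bb bx; have fc := Sup_fin Bc cx.
apply: fproper_ltn_card; rewrite fproperE; apply/andP; split.
  rewrite -fset_set_sub //= => d [Bd [cd ndc]]; split=> //; split.
    by move=> z /(proj1 sbc) /cd.
  by move=> db; apply: ndc => z /db /(proj1 sbc).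
apply/negP; rewrite -fset_set_sub // => H.
have : Sup b c by split.
move=> /H [_ [_ ]]; apply; by [].
Qed.


Fixpoint E (n : nat) : set (set X) :=
  match n with
  | 0 => B
  | n'.+1 => [set b | B b /\ ((exists c, E n' c /\ strict b c) \/ exists y, b = [set y])]
  end.

Lemma E_B n : E n `<=` B.
Proof. by case: n => [|n] b //= [].  Qed.

Lemma base_ex (O : set X) x : open O -> O x -> exists b, B b /\ b x /\ b `<=` O.
Proof. by move=> oO Ox; apply: (proj2 (proj1 HB)). Qed.

Lemma E_cover n x : exists b, E n b /\ b x.
Proof.
elim: n => [|n [b [Enb bx]]].
  by have [b [Bb [bx _]]] := base_ex (@openT X) (I : setT x); exists b.
have [[y by_]|ns] := classic (exists y, b = [set y]).
  by exists b; split => //=; split; [apply: E_B Enb| right; exists y].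
have [z [bz zx]] : exists z, b z /\ z <> x.
  apply: NNPP => H; apply: ns; exists x; apply/seteqP; split=> w //=.
    by move=> bw; apply: NNPP => wx; apply: H; exists w.
  by move=> ->.
have oO : open (b `&` ~` [set z]).
  by apply: openI; [apply: B_open; apply: E_B Enb | apply: closed_openC].
have [b' [Bb' [b'x b'O]]] := base_ex oO (conj bx (fun e => zx (esym e))).
exists b'; split=> //=; split=> //; left; exists b; split=> //; split.
  by move=> w /b'O [].
by move=> /(_ z bz) /b'O [_]; apply.
Qed.

Lemma nonsing_strict b c y : b y -> ~ (exists w, b = [set w]) -> strict b c ->
  ~ (exists w, c = [set w]).
Proof.
move=> b_y nsb sbc [w cw]; apply: nsb; exists w; apply/seteqP; split.
  by move=> v /(proj1 sbc); rewrite cw.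
move=> v /= ->; have := proj1 sbc y b_y; rewrite cw /= => <- //.
Qed.

Lemma E_bound n : forall b y, E n b -> b y -> ~ (exists w, b = [set w]) ->
  (n <= #|` fset_set (Sup b)|)%N.
Proof.
elim: n => [//|n IH] b y /= [Bb [[c [Enc sbc]]|//]] b_y nsb.
have cy : c y by apply: (proj1 sbc).
have := IH c y Enc cy (nonsing_strict b_y nsb sbc).
move=> h; apply: leq_ltn_trans h _.
by apply: (Sup_lt Bb b_y (E_B Enc) sbc).
Qed.

Definition G (n : nat) := [set g | E n g /\ forall c, E n c -> g `<=` c -> c = g].

Lemma G_ex n b y : E n b -> b y -> exists g, G n g /\ b `<=` g.
Proof.
move=> Enb b_y.
have [k] := ubnP (#|` fset_set (Sup b)|).
elim: k b y Enb b_y => [//|k IH] b y Enb b_y hk.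
have [mx|] := classic (forall c, E n c -> b `<=` c -> c = b).
  by exists b; split; [split|].
move=> H; have [c Hc] := not_all_ex_not _ _ H.
have [Enc Hc'] := imply_to_and _ _ Hc.
have [bc cb] := imply_to_and _ _ Hc'.
have sbc : strict b c.
  by split=> // cb'; apply: cb; apply/seteqP; split.
have cy : c y by apply: bc.
have [g [Gg cg]] := IH c y Enc cy (leq_trans (Sup_lt (E_B Enb) b_y (E_B Enc) sbc) hk).
by exists g; split=> // z /bc /cg.
Qed.

Lemma G_cover n x : exists g, G n g /\ g x.
Proof.
have [b [Enb bx]] := E_cover n x.
by have [g [Gg bg]] := G_ex Enb bx; exists g; split=> //; apply: bg.
Qed.

Lemma G_B n : G n `<=` B.
Proof. by move=> g [/E_B]. Qed.

Lemma G_pfin n x : finite_set [set g | G n g /\ g x].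
Proof.
have [g [Gg gx]] := G_cover n x.
apply: (@sub_finite_set _ _ ([set g] `|` [set c | B c /\ c x /\ c `&` ~` g !=set0])).
  move=> h [Gh hx]; have [->|ne] := classic (h = g); first by left.
  right; split; first exact: G_B Gh.
  split=> //; apply: NNPP => H; apply: ne.
  apply/esym; apply: (proj2 Gh) (proj1 Gg) _ => z hz; apply: NNPP => gz; apply: H.
  by exists z.
rewrite finite_setU; split; first exact: finite_set1.
by apply: big_fin; apply: nbhs_of_open => //; apply: B_open; apply: G_B Gg.
Qed.

Lemma shrink (F : set (set X)) : finite_set F -> F `<=` B ->
  (forall b, F b -> exists y, b y /\ ~ exists w, b = [set w]) ->
  (forall b c, F b -> B c -> strict b c -> F c) ->
  forall n b, (#|` fset_set F| < n)%N -> F b -> ~ E n b.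
Proof.
move=> fF FB Fns Fup n b hn Fb Enb.
have [y [b_y nsb]] := Fns b Fb.
have h1 := E_bound Enb b_y nsb.
have SF : Sup b `<=` F by move=> c [Bc sbc]; apply: Fup Fb Bc sbc.
have fS : finite_set (Sup b) by apply: sub_finite_set SF fF.
have : (#|` fset_set (Sup b)| <= #|` fset_set F|)%N.
  by apply: fsubset_leq_card; rewrite -fset_set_sub.
move=> h2; have := leq_trans h1 h2; rewrite leqNgt hn //.
Qed.


Definition Oa k (Us : 'I_k -> set X) (a : X) := [set z | forall i, Us i a -> Us i z].

Lemma Oa_nbhs k (Us : 'I_k -> set X) a : (forall i, open (Us i)) ->
  is_nbhs_of open a (Oa Us a).
Proof.
move=> oU.
have : nbhs a (Oa Us a).
  apply: (@filter_forall X 'I_k (fun i => [set z | Us i a -> Us i z])) => i.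
  have [h|h] := classic (Us i a).
    apply: filterS (open_nbhs_nbhs (conj (oU i) h)) => z uz _ //.
  by apply: filterS (@filterT _ _ _) => z _ /h.
rewrite nbhsE; move=> [V0 [oO Oa1] OS].
by exists V0; split; [|split].
Qed.

Lemma Oa_self k (Us : 'I_k -> set X) a : Oa Us a a.
Proof. by []. Qed.

Definition VS (S : set (set X)) : set (finsub X) :=
  [set A | (forall x, proj1_sig A x -> exists g, S g /\ g x) /\
           (forall g, S g -> exists x, proj1_sig A x /\ g x)].

Lemma VS_sub_basic k (Us : 'I_k -> set X) (A : finsub X) S :
  vietoris_basic Us A ->
  (forall g, S g -> forall a, proj1_sig A a -> g a -> g `<=` Oa Us a) ->
  VS S A -> VS S `<=` vietoris_basic Us.
Proof.
move=> [A1 A2] hS [V1 V2] C [C1 C2]; split.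
  move=> c Cc; have [g [Sg gc]] := C1 c Cc.
  have [a [Aa ga]] := V2 g Sg; have [i ia] := A1 a Aa.
  by exists i; apply: (hS g Sg a Aa ga c gc).
move=> i; have [a [Aa ia]] := A2 i.
have [g [Sg ga]] := V1 a Aa; have [c [Cc gc]] := C2 g Sg.
by exists c; split=> //; apply: (hS g Sg a Aa ga c gc).
Qed.

Lemma basic_seq (s : seq (set X)) :
  vietoris_basic (fun i : 'I_(size s) => nth set0 s i) = VS [set g | g \in s].
Proof.
have memP g : (g \in s) <-> exists i : 'I_(size s), nth set0 s i = g.
  split; first by move=> /(nthP set0) [i hi <-]; exists (Ordinal hi).
  by move=> [i <-]; apply: mem_nth.
apply/seteqP; split=> A [h1 h2]; split.
- move=> x Ax; have [i ix] := h1 x Ax; exists (nth set0 s i); split=> //.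
  by apply/memP; exists i.
- move=> g /= /memP [i <-]; exact: h2 i.
- move=> x Ax; have [g [/= /memP [i gi] gx]] := h1 x Ax.
  by exists i; rewrite gi.
- move=> i; apply: h2 => /=; apply/memP; by exists i.
Qed.

Lemma VS_open S : finite_set S -> S !=set0 -> S `<=` open ->
  @vietoris_open X (VS S).
Proof.
move=> /finite_fsetP [Xs ->] [g0 g0S] So A VA.
exists (size Xs), (fun i : 'I_(size Xs) => nth set0 Xs i).
split.
  have : g0 \in (Xs : seq _) by [].
  by case: (Xs : seq _) => //.
split.
  move=> i; apply: So => /=; apply: mem_nth; exact: ltn_ord.
rewrite basic_seq; split=> //.
Qed.


Definition BF : set (set (finsub X)) :=
  [set W | exists n S, finite_set S /\ S !=set0 /\ S `<=` G n /\ W = VS S].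

Definition FA (A : set X) k (Us : 'I_k -> set X) : set (set X) :=
  [set b | B b /\ exists a, A a /\ b a /\ ~ (b `<=` Oa Us a)].

Lemma FA_fin (A : set X) k (Us : 'I_k -> set X) : finite_set A ->
  (forall i, open (Us i)) -> finite_set (FA A Us).
Proof.
move=> fA oU.
apply: (@sub_finite_set _ _ (\bigcup_(a in A) [set c | B c /\ c a /\ c `&` ~` Oa Us a !=set0])).
  move=> b [Bb [a [Aa [ba nb]]]]; exists a => //; split=> //; split=> //.
  apply: NNPP => H; apply: nb => z bz; apply: NNPP => nz; apply: H.
  by exists z.
apply: bigcup_finite => // a _; apply: big_fin; exact: Oa_nbhs.
Qed.

Lemma FA_shrink (A : set X) k (Us : 'I_k -> set X) : finite_set A ->
  (forall i, open (Us i)) ->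
  forall n g a, (#|` fset_set (FA A Us)| < n)%N -> G n g -> A a -> g a ->
    g `<=` Oa Us a.
Proof.
move=> fA oU n g a hn Gg Aa ga; apply: NNPP => ng.
apply: (shrink (FA_fin fA oU) _ _ _ hn _ (proj1 Gg)).
- by move=> b [].
- move=> b [Bb [a' [Aa' [ba' nb]]]]; exists a'; split=> // -[w bw].
  apply: nb => z; rewrite bw /= => ->.
  have := ba'; rewrite bw /= => <- //.
- move=> b c [Bb [a' [Aa' [ba' nb]]]] Bc sbc; split=> //; exists a'.
  split=> //; split; first exact: (proj1 sbc).
  by move=> cO; apply: nb => z /(proj1 sbc) /cO.
- by split; [apply: G_B Gg| exists a].
Qed.

Lemma powerset_fin (Y : choiceType) (T : set Y) : finite_set T ->
  finite_set [set S | S `<=` T].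
Proof.
move=> /finite_fsetP [Xs ->].
apply: (@sub_finite_set _ _ ((fun Z : {fset Y} => [set` Z]) @` [set` fpowerset Xs])).
  move=> S ST; have fS : finite_set S by apply: sub_finite_set ST _; exact: finite_fset.
  exists (fset_set S); last exact: fset_setK.
  rewrite /= fpowersetE -(set_fsetK Xs) -fset_set_sub //; exact: finite_fset.
by apply: finite_image; apply: finite_fset.
Qed.


Lemma BF_base : is_base (@vietoris_open X) BF.
Proof.
split.
  move=> W [n [S [fS [S0 [SG ->]]]]]; apply: VS_open => // g /SG /G_B; exact: B_open.
move=> W A oW WA; have [k [Us [k0 [oU [bA bW]]]]] := oW A WA.
have fA : finite_set (proj1_sig A) := proj1 (proj2_sig A).
have [a0 Aa0] : proj1_sig A !=set0 := proj2 (proj2_sig A).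
pose m := (#|` fset_set (FA (proj1_sig A) Us)|).+1.
pose S := [set g | G m g /\ exists a, proj1_sig A a /\ g a].
have hS : forall g, S g -> forall a, proj1_sig A a -> g a -> g `<=` Oa Us a.
  move=> g [Gg _] a Aa ga; exact: (FA_shrink fA oU (ltnSn _) Gg Aa ga).
have VA : VS S A.
  split.
    move=> x Ax; have [g [Gg gx]] := G_cover m x.
    by exists g; split=> //; split=> //; exists x.
  by move=> g [_ [a [Aa ga]]]; exists a.
exists (VS S); split; last split=> //.
  exists m, S; split.
    apply: (@sub_finite_set _ _ (\bigcup_(a in proj1_sig A) [set g | G m g /\ g a])).
      by move=> g [Gg [a [Aa ga]]]; exists a.
    by apply: bigcup_finite => // a _; apply: G_pfin.
  split; last by split=> // g [].
  have [g [Gg ga]] := G_cover m a0; exists g; split=> //; by exists a0.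
by move=> C /(VS_sub_basic bA hS VA) /bW.
Qed.

Lemma BF_preg (A : finsub X) (U : set (finsub X)) :
  is_nbhs_of (@vietoris_open X) A U ->
  finite_set [set b | BF b /\ b A /\ b `&` ~` U !=set0].
Proof.
move=> [W0 [oO [OA OU]]]; have [k [Us [k0 [oU [bA bO]]]]] := oO A OA.
have fA : finite_set (proj1_sig A) := proj1 (proj2_sig A).
pose N := #|` fset_set (FA (proj1_sig A) Us)|.
pose T := \bigcup_(m in `I_(N.+1)) \bigcup_(a in proj1_sig A) [set g | G m g /\ g a].
have fT : finite_set T.
  apply: bigcup_finite => // m _; apply: bigcup_finite => // a _; exact: G_pfin.
apply: (@sub_finite_set _ _ (VS @` [set S | S `<=` T])); last first.
  by apply: finite_image; apply: powerset_fin.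
move=> b [[n [S [fS [S0 [SG ->]]]]] [VA [C [VC nUC]]]].
have hn : (n < N.+1)%N.
  rewrite ltnNge; apply/negP => hN.
  have hS : forall g, S g -> forall a, proj1_sig A a -> g a -> g `<=` Oa Us a.
    by move=> g Sg a Aa ga; apply: (FA_shrink fA oU hN (SG g Sg) Aa ga).
  by apply: nUC; apply: OU; apply: bO; apply: (VS_sub_basic bA hS VA).
exists S => // g Sg; exists n => //.
have [a [Aa ga]] := proj2 VA g Sg.
by exists a => //; split=> //; apply: SG.
Qed.

End Dev.

Lemma forward (X : topologicalType) : (forall x : X, closed [set x]) ->
  has_point_regular_base (@open X) -> has_point_regular_base (@vietoris_open X).
Proof.
move=> T1 [B HB]; exists (BF B); split; first exact: BF_base.
move=> A U; exact: BF_preg.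
Qed.

Section Back.
Variable X : topologicalType.

Definition single (x : X) : finsub X :=
  exist _ [set x] (conj (finite_set1 x) (ex_intro (fun y => [set x] y) x erefl)).

Definition tr (b : set (finsub X)) : set X := [set x | b (single x)].

Definition WO (O : set X) : set (finsub X) := [set A | forall y, proj1_sig A y -> O y].

Lemma tr_open b : @vietoris_open X b -> open (tr b).
Proof.
move=> ob; rewrite openE => x bx.
have [k [Us [k0 [oU [[b1 b2] bW]]]]] := ob (single x) bx.
have : nbhs x [set z | forall i, Us i z].
  apply: (@filter_forall X 'I_k Us) => i; apply: open_nbhs_nbhs; split => //.
  by have [y [/= -> ?]] := b2 i.
apply: filterS => z hz; apply: bW; split.
  by move=> y /= ->; exists (Ordinal k0).
by move=> i; exists z.
Qed.

Lemma WO_open O : open O -> @vietoris_open X (WO O).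
Proof.
move=> oO A WA; exists 1%N, (fun _ => O); split=> //; split=> //; split.
  split; first by move=> y Ay; exists ord0; apply: WA.
  by move=> _; have [a Aa] := proj2 (proj2_sig A); exists a; split=> //; apply: WA.
by move=> C [c1 _] y Cy; have [i h] := c1 y Cy.
Qed.

Lemma backward : has_point_regular_base (@vietoris_open X) ->
  has_point_regular_base (@open X).
Proof.
move=> [BB [[BBo BBb] Hp]].
exists [set t | exists b, BB b /\ t = tr b]; split; first split.
- by move=> t [b [Bb ->]]; apply: tr_open; apply: BBo.
- move=> O x oO Ox.
  have [b [Bb [bx bW]]] := BBb (WO O) (single x) (WO_open oO) (fun y (e : y = x) => eq_ind_r O Ox e).
  exists (tr b); split; first by exists b.
  split=> // z bz; exact: (bW _ bz z erefl).
- move=> y U [V0 [oO [Oy OU]]].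
  have fF := Hp (single y) (WO V0) (ex_intro _ (WO V0) (conj (WO_open oO)
     (conj (fun z (e : z = y) => eq_ind_r V0 Oy e) (fun A h => h)))).
  apply: (@sub_finite_set _ _ (tr @` [set b | BB b /\ b (single y) /\ b `&` ~` WO V0 !=set0])); last first.
    exact: finite_image.
  move=> t [[b [Bb ->]] [ty [z [tz nUz]]]]; exists b => //; split=> //; split=> //.
  exists (single z); split=> // hW; apply: nUz; apply: OU; exact: (hW z erefl).
Qed.

End Back.

Theorem theorem4p7 (X : topologicalType) :
  hausdorff_space X -> @regular_space X ->
  (has_point_regular_base (@open X) <-> has_point_regular_base (@vietoris_open X)).
Proof.
move=> H _; split; last exact: backward.
apply: forward => x; apply: accessible_closed_set1; exact: hausdorff_accessible.
Qed.
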